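(* Let $\{K_n\}$ be Kraus operators of an incoherent operation with respect to $I$. For every density matrix $\rho$ on $\mathcal H$, setting $p_n=\mathrm{Tr}[K_n\rho K_n^\dagger]$ and $\rho_n=K_n\rho K_n^\dagger/p_n$ for $p_n>0$, we have $$R_I(\rho)\ \ge\ \sum_{n:\,p_n>0}p_n\,R_I(\rho_n).$$
   Context: Fix a Hilbert space $\mathcal H$ of finite dimension $d$ with a fixed orthonormal basis $I=\{|i\rangle\}_{i=1}^d$. The set $\mathcal I$ of incoherent states consists of all density matrices $\sum_{i}p_i|i\rangle\langle i|$ with $p_i\ge0$, $\sum_ip_i=1$. An incoherent operation is a CPTP map $\Phi(\rho)=\sum_nK_n\rho K_n^\dagger$ with $\sum_nK_n^\dagger K_n=\mathbb 1$ such that $K_n\delta K_n^\dagger$ is diagonal in the basis $I$ for every $\delta\in\mathcal I$ and every $n$. For a density matrix $\rho$, let $\rho^{\mathrm{diag}}=\sum_i\langle i|\rho|i\rangle\,|i\rangle\langle i|$. For a pure state $|\psi\rangle=\sum_ia_i|i\rangle$ define $R_I(|\psi\rangle)=S\big((|\psi\rangle\langle\psi|)^{\mathrm{diag}}\big)=-\sum_i|a_i|^2\log_2|a_i|^2$, where $S$ is the von Neumann entropy. For a general density matrix $\rho$ define $R_I(\rho)=\min\sum_ep_eR_I(|\psi_e\rangle)$, the minimum over all finite pure-state decompositions $\rho=\sum_ep_e|\psi_e\rangle\langle\psi_e|$ with $p_e>0$, $\sum_ep_e=1$. *)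

(* Defs.v *)
From Stdlib Require Import Reals Lra ClassicalEpsilon.
Open Scope R_scope.

Record C := mkC { Cre : R ; Cim : R }.
Definition C0 : C := mkC 0 0.
Definition C1 : C := mkC 1 0.
Definition RtoC (x : R) : C := mkC x 0.
Definition Cadd (a b : C) : C := mkC (Cre a + Cre b) (Cim a + Cim b).
Definition Cmul (a b : C) : C :=
  mkC (Cre a * Cre b - Cim a * Cim b) (Cre a * Cim b + Cim a * Cre b).
Definition Cconj (a : C) : C := mkC (Cre a) (- Cim a).
Definition Cnorm2 (a : C) : R := Cre a * Cre a + Cim a * Cim a.

Fixpoint sumC (n : nat) (f : nat -> C) : C :=
  match n with O => C0 | S k => Cadd (sumC k f) (f k) end.
Fixpoint sumR (n : nat) (f : nat -> R) : R :=
  match n with O => 0 | S k => sumR k f + f k end.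

(** * Vectors and matrices on H = C^d, in the fixed basis I = {|i>}, i < d.
    Entries outside 0..d-1 are irrelevant. *)
Definition Vec := nat -> C.
Definition Mat := nat -> nat -> C.

Definition mat_mul (d : nat) (A B : Mat) : Mat :=
  fun i j => sumC d (fun k => Cmul (A i k) (B k j)).
Definition adjoint (A : Mat) : Mat := fun i j => Cconj (A j i).
Definition trace (d : nat) (A : Mat) : C := sumC d (fun i => A i i).
Definition id_mat : Mat := fun i j => if Nat.eqb i j then C1 else C0.
Definition scale_mat (c : R) (A : Mat) : Mat := fun i j => Cmul (RtoC c) (A i j).
Definition outer (psi : Vec) : Mat := fun i j => Cmul (psi i) (Cconj (psi j)).

Definition mat_eq (d : nat) (A B : Mat) : Prop :=
  forall i j, (i < d)%nat -> (j < d)%nat -> A i j = B i j.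

Definition quad (d : nat) (A : Mat) (v : Vec) : C :=
  sumC d (fun i => sumC d (fun j => Cmul (Cconj (v i)) (Cmul (A i j) (v j)))).

Definition hermitian (d : nat) (A : Mat) : Prop := mat_eq d A (adjoint A).
Definition psd (d : nat) (A : Mat) : Prop :=
  hermitian d A /\ forall v : Vec, 0 <= Cre (quad d A v).
Definition density (d : nat) (rho : Mat) : Prop :=
  psd d rho /\ trace d rho = C1.

Definition is_diag (d : nat) (A : Mat) : Prop :=
  forall i j, (i < d)%nat -> (j < d)%nat -> i <> j -> A i j = C0.

Definition incoherent (d : nat) (delta : Mat) : Prop :=
  exists p : nat -> R,
    (forall i, (i < d)%nat -> 0 <= p i) /\ sumR d p = 1 /\
    mat_eq d delta (fun i j => if Nat.eqb i j then RtoC (p i) else C0).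

Definition diag_part (rho : Mat) : Mat :=
  fun i j => if Nat.eqb i j then rho i i else C0.

Definition kraus_complete (d N : nat) (K : nat -> Mat) : Prop :=
  mat_eq d (fun i j => sumC N (fun n => mat_mul d (adjoint (K n)) (K n) i j)) id_mat.

Definition incoherent_kraus (d N : nat) (K : nat -> Mat) : Prop :=
  kraus_complete d N K /\
  forall delta, incoherent d delta ->
    forall n, (n < N)%nat -> is_diag d (mat_mul d (mat_mul d (K n) delta) (adjoint (K n))).

Definition xlog2 (x : R) : R := if Rle_dec x 0 then 0 else x * (ln x / ln 2).

(** R_I(|psi>) = S((|psi><psi|)^diag) = - sum_i |a_i|^2 log2 |a_i|^2 *)
Definition RI_pure (d : nat) (psi : Vec) : R :=
  - sumR d (fun i => xlog2 (Cnorm2 (psi i))).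

Definition normalized (d : nat) (psi : Vec) : Prop :=
  sumR d (fun i => Cnorm2 (psi i)) = 1.

Definition pure_decomposition (d : nat) (rho : Mat) (m : nat)
    (p : nat -> R) (psi : nat -> Vec) : Prop :=
  (forall e, (e < m)%nat -> 0 < p e) /\ sumR m p = 1 /\
  (forall e, (e < m)%nat -> normalized d (psi e)) /\
  mat_eq d rho (fun i j => sumC m (fun e => Cmul (RtoC (p e)) (outer (psi e) i j))).

Definition RI_costs (d : nat) (rho : Mat) (r : R) : Prop :=
  exists m p psi, pure_decomposition d rho m p psi /\
    r = sumR m (fun e => p e * RI_pure d (psi e)).

Definition is_glb (S : R -> Prop) (r : R) : Prop :=
  (forall x, S x -> r <= x) /\ (forall b, (forall x, S x -> b <= x) -> b <= r).

(** R_I(rho) = min over decompositions (taken as the greatest lower bound,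
    which coincides with the minimum since the minimum is attained). *)
Definition RI (d : nat) (rho : Mat) : R :=
  epsilon (inhabits 0) (fun r => is_glb (RI_costs d rho) r).

Definition kraus_prob (d : nat) (K : Mat) (rho : Mat) : R :=
  Cre (trace d (mat_mul d (mat_mul d K rho) (adjoint K))).

Definition kraus_post (d : nat) (K : Mat) (rho : Mat) : Mat :=
  scale_mat (/ kraus_prob d K rho) (mat_mul d (mat_mul d K rho) (adjoint K)).

(* Main.v *)
From Stdlib Require Import Reals Lra Lia Psatz ClassicalEpsilon Classical Ring.
Require Import Defs.
Open Scope R_scope.

Lemma Ceq (a b : C) : Cre a = Cre b -> Cim a = Cim b -> a = b.
Proof. destruct a, b; simpl; intros -> ->; reflexivity. Qed.

Definition Copp (a : C) : C := mkC (- Cre a) (- Cim a).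
Definition Csub (a b : C) : C := Cadd a (Copp b).

Lemma C_ring_th : ring_theory C0 C1 Cadd Cmul Csub Copp (@eq C).
Proof.
  constructor; intros; apply Ceq; destruct x; try destruct y; try destruct z;
  unfold Cadd, Cmul, Csub, Copp, C0, C1; simpl; ring.
Qed.
Add Ring Cring : C_ring_th.

Lemma Cconj_add a b : Cconj (Cadd a b) = Cadd (Cconj a) (Cconj b).
Proof. apply Ceq; simpl; ring. Qed.
Lemma Cconj_mul a b : Cconj (Cmul a b) = Cmul (Cconj a) (Cconj b).
Proof. apply Ceq; simpl; ring. Qed.
Lemma Cconj_conj a : Cconj (Cconj a) = a.
Proof. apply Ceq; simpl; ring. Qed.
Lemma Cconj_RtoC r : Cconj (RtoC r) = RtoC r.
Proof. apply Ceq; simpl; ring. Qed.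
Lemma Cconj_C0 : Cconj C0 = C0.
Proof. apply Ceq; simpl; ring. Qed.
Lemma RtoC_mul a b : RtoC (a * b) = Cmul (RtoC a) (RtoC b).
Proof. apply Ceq; simpl; ring. Qed.
Lemma RtoC_add a b : RtoC (a + b) = Cadd (RtoC a) (RtoC b).
Proof. apply Ceq; simpl; ring. Qed.
Lemma Cnorm2_nonneg a : 0 <= Cnorm2 a.
Proof. unfold Cnorm2; nra. Qed.
Lemma Cnorm2_mul a b : Cnorm2 (Cmul a b) = Cnorm2 a * Cnorm2 b.
Proof. unfold Cnorm2; simpl; ring. Qed.
Lemma Cnorm2_conj a : Cnorm2 (Cconj a) = Cnorm2 a.
Proof. unfold Cnorm2; simpl; ring. Qed.
Lemma Cnorm2_zero a : Cnorm2 a = 0 -> a = C0.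
Proof. unfold Cnorm2; destruct a as [x y]; simpl; intro H.
  apply Ceq; simpl; nra. Qed.
Lemma Cnorm2_pos a : a <> C0 -> 0 < Cnorm2 a.
Proof. intro H. destruct (Cnorm2_nonneg a) as [h|h]; auto.
  exfalso; apply H, Cnorm2_zero; auto. Qed.
Lemma Cnorm2_C0 : Cnorm2 C0 = 0.
Proof. unfold Cnorm2; simpl; ring. Qed.
Lemma Cre_conj_mul a : Cre (Cmul (Cconj a) a) = Cnorm2 a.
Proof. unfold Cnorm2; simpl; ring. Qed.
Lemma Cim_conj_mul a : Cim (Cmul (Cconj a) a) = 0.
Proof. simpl; ring. Qed.
Lemma Cmul_eq0 a b : Cmul a b = C0 -> a = C0 \/ b = C0.
Proof. intro H. assert (Cnorm2 a * Cnorm2 b = 0) as E.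
  { rewrite <- Cnorm2_mul, H; apply Cnorm2_C0. }
  apply Rmult_integral in E; destruct E; [left|right]; apply Cnorm2_zero; auto. Qed.
Lemma Cconj_eq0 a : Cconj a = C0 -> a = C0.
Proof. intro H; rewrite <- (Cconj_conj a), H; apply Cconj_C0. Qed.

Definition Cdec (a b : C) : {a = b} + {a <> b}.
Proof. destruct (Req_EM_T (Cre a) (Cre b)), (Req_EM_T (Cim a) (Cim b)).
  - left; apply Ceq; auto.
  - right; intro h; subst; auto.
  - right; intro h; subst; auto.
  - right; intro h; subst; auto. Defined.

Lemma sumC_ext n f g : (forall k, (k < n)%nat -> f k = g k) -> sumC n f = sumC n g.
Proof. induction n; simpl; intros; auto. rewrite IHn, H; auto. Qed.
Lemma sumR_ext n f g : (forall k, (k < n)%nat -> f k = g k) -> sumR n f = sumR n g.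
Proof. induction n; simpl; intros; auto. rewrite IHn, H; auto. Qed.
Lemma sumC_add n f g : sumC n (fun k => Cadd (f k) (g k)) = Cadd (sumC n f) (sumC n g).
Proof. induction n; simpl. apply Ceq; simpl; ring. rewrite IHn; ring. Qed.
Lemma sumR_add n f g : sumR n (fun k => f k + g k) = sumR n f + sumR n g.
Proof. induction n; simpl. ring. rewrite IHn; ring. Qed.
Lemma sumC_mul_l n c f : Cmul c (sumC n f) = sumC n (fun k => Cmul c (f k)).
Proof. induction n; simpl. apply Ceq; simpl; ring. rewrite <- IHn; ring. Qed.
Lemma sumC_mul_r n c f : Cmul (sumC n f) c = sumC n (fun k => Cmul (f k) c).
Proof. induction n; simpl. apply Ceq; simpl; ring. rewrite <- IHn; ring. Qed.
Lemma sumR_mul_l n c f : c * sumR n f = sumR n (fun k => c * f k).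
Proof. induction n; simpl. ring. rewrite <- IHn; ring. Qed.
Lemma sumR_mul_r n c f : sumR n f * c = sumR n (fun k => f k * c).
Proof. induction n; simpl. ring. rewrite <- IHn; ring. Qed.
Lemma sumC_swap n m f : sumC n (fun i => sumC m (fun j => f i j)) = sumC m (fun j => sumC n (fun i => f i j)).
Proof. induction n; simpl.
  - induction m; simpl; auto. rewrite <- IHm; apply Ceq; simpl; ring.
  - rewrite IHn, <- sumC_add; reflexivity. Qed.
Lemma sumR_swap n m f : sumR n (fun i => sumR m (fun j => f i j)) = sumR m (fun j => sumR n (fun i => f i j)).
Proof. induction n; simpl.
  - induction m; simpl; auto. rewrite <- IHm; ring.
  - rewrite IHn, <- sumR_add; reflexivity. Qed.
Lemma sumC_zero n f : (forall k, (k < n)%nat -> f k = C0) -> sumC n f = C0.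
Proof. induction n; simpl; intros; auto. rewrite IHn, H; auto. apply Ceq; simpl; ring. Qed.
Lemma sumR_zero n f : (forall k, (k < n)%nat -> f k = 0) -> sumR n f = 0.
Proof. induction n; simpl; intros; auto. rewrite IHn, H; auto. ring. Qed.
Lemma sumC_delta n f j : (j < n)%nat -> (forall k, (k < n)%nat -> k <> j -> f k = C0) -> sumC n f = f j.
Proof. induction n; simpl; intros. lia.
  destruct (Nat.eq_dec j n).
  - subst. rewrite sumC_zero. apply Ceq; simpl; ring. intros; apply H0; lia.
  - rewrite IHn by (auto; lia). rewrite (H0 n) by lia. apply Ceq; simpl; ring. Qed.
Lemma sumR_delta n f j : (j < n)%nat -> (forall k, (k < n)%nat -> k <> j -> f k = 0) -> sumR n f = f j.
Proof. induction n; simpl; intros. lia.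
  destruct (Nat.eq_dec j n).
  - subst. rewrite sumR_zero. ring. intros; apply H0; lia.
  - rewrite IHn by (auto; lia). rewrite (H0 n) by lia. ring. Qed.
Lemma Cre_sum n f : Cre (sumC n f) = sumR n (fun k => Cre (f k)).
Proof. induction n; simpl; auto. rewrite IHn; auto. Qed.
Lemma Cim_sum n f : Cim (sumC n f) = sumR n (fun k => Cim (f k)).
Proof. induction n; simpl; auto. rewrite IHn; auto. Qed.
Lemma Cconj_sum n f : Cconj (sumC n f) = sumC n (fun k => Cconj (f k)).
Proof. induction n; simpl. apply Ceq; simpl; ring. rewrite Cconj_add, IHn; auto. Qed.
Lemma sumR_le n f g : (forall k, (k < n)%nat -> f k <= g k) -> sumR n f <= sumR n g.
Proof. induction n; simpl; intros. lra. assert (f n <= g n) by (apply H; lia).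
  assert (sumR n f <= sumR n g) by (apply IHn; intros; apply H; lia). lra. Qed.
Lemma sumR_nonneg n f : (forall k, (k < n)%nat -> 0 <= f k) -> 0 <= sumR n f.
Proof. intros. replace 0 with (sumR n (fun _ => 0)). apply sumR_le; auto.
  apply sumR_zero; auto. Qed.
Lemma sumR_term_le n f j : (forall k, (k < n)%nat -> 0 <= f k) -> (j < n)%nat -> f j <= sumR n f.
Proof. induction n; simpl; intros. lia.
  assert (0 <= sumR n f) by (apply sumR_nonneg; intros; apply H; lia).
  destruct (Nat.eq_dec j n). subst; lra.
  assert (f j <= sumR n f) by (apply IHn; auto; lia). assert (0 <= f n) by (apply H; lia). lra. Qed.
Lemma sumR_opp n f : sumR n (fun k => - f k) = - sumR n f.
Proof. induction n; simpl. ring. rewrite IHn; ring. Qed.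
Lemma sumC_mul_sums n m f g : Cmul (sumC n f) (sumC m g) = sumC n (fun j => sumC m (fun k => Cmul (f j) (g k))).
Proof. rewrite sumC_mul_r. apply sumC_ext; intros. apply sumC_mul_l. Qed.

Definition applyM (d : nat) (A : Mat) (v : Vec) : Vec := fun a => sumC d (fun l => Cmul (A a l) (v l)).

Lemma sumC_swap_ext n m f g : (forall i j, f i j = g j i) ->
  sumC n (fun i => sumC m (fun j => f i j)) = sumC m (fun j => sumC n (fun i => g j i)).
Proof. intros. rewrite sumC_swap. apply sumC_ext; intros; apply sumC_ext; intros; auto. Qed.

Lemma Cnorm2_as n (z : Vec) (A : nat -> C) :
  Cnorm2 (sumC n (fun j => Cmul (A j) (z j))) =
  Cre (sumC n (fun j => sumC n (fun k => Cmul (Cmul (Cconj (z j)) (z k)) (Cmul (Cconj (A j)) (A k))))).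
Proof. rewrite <- Cre_conj_mul. rewrite Cconj_sum, sumC_mul_sums. f_equal.
  apply sumC_ext; intros; apply sumC_ext; intros. rewrite Cconj_mul; ring. Qed.

Lemma completeness_id d N K (b : Vec) : kraus_complete d N K ->
  sumR N (fun n => sumR d (fun i => Cnorm2 (applyM d (K n) b i))) = sumR d (fun j => Cnorm2 (b j)).
Proof.
  intro HK. unfold applyM.
  transitivity (Cre (sumC N (fun n => sumC d (fun i => sumC d (fun j => sumC d (fun k =>
     Cmul (Cmul (Cconj (b j)) (b k)) (Cmul (Cconj (K n i j)) (K n i k)))))))).
  { rewrite Cre_sum. apply sumR_ext; intros. rewrite Cre_sum. apply sumR_ext; intros.
    apply Cnorm2_as. }
  transitivity (Cre (sumC d (fun j => sumC d (fun k => Cmul (Cmul (Cconj (b j)) (b k))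
       (sumC N (fun n => mat_mul d (adjoint (K n)) (K n) j k)))))).
  { f_equal.
    transitivity (sumC N (fun n => sumC d (fun j => sumC d (fun k => sumC d (fun i =>
     Cmul (Cmul (Cconj (b j)) (b k)) (Cmul (Cconj (K n i j)) (K n i k))))))).
    { apply sumC_ext; intros.
      rewrite sumC_swap. apply sumC_ext; intros. rewrite sumC_swap. reflexivity. }
    rewrite sumC_swap. apply sumC_ext; intros. rewrite sumC_swap. apply sumC_ext; intros.
    rewrite sumC_mul_l. apply sumC_ext; intros. unfold mat_mul, adjoint.
    rewrite sumC_mul_l. reflexivity. }
  rewrite Cre_sum. apply sumR_ext; intros j Hj.
  rewrite (sumC_delta d _ j Hj).
  - rewrite (HK j j Hj Hj). unfold id_mat. rewrite Nat.eqb_refl. unfold Cnorm2; simpl; ring.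
  - intros k Hk Hkj. rewrite (HK j k Hj Hk). unfold id_mat.
    destruct (Nat.eqb_spec j k); [lia|]. apply Ceq; simpl; ring.
Qed.
Definition deltaM (j : nat) : Mat := fun i i' => if Nat.eqb i i' then (if Nat.eqb i j then C1 else C0) else C0.

Lemma deltaM_incoh d j : (j < d)%nat -> incoherent d (deltaM j).
Proof. intro Hj. exists (fun i => if Nat.eqb i j then 1 else 0). split; [|split].
  - intros i _; destruct (Nat.eqb i j); lra.
  - rewrite (sumR_delta d _ j Hj). rewrite Nat.eqb_refl; auto.
    intros k _ hk. destruct (Nat.eqb_spec k j); [lia|auto].
  - intros i i' _ _. unfold deltaM. destruct (Nat.eqb i i'); auto.
    destruct (Nat.eqb i j); apply Ceq; simpl; auto.
Qed.

Lemma mul_deltaM d (A : Mat) j a k : (k < d)%nat ->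
  mat_mul d A (deltaM j) a k = if Nat.eqb k j then A a j else C0.
Proof. intro Hk. unfold mat_mul. rewrite (sumC_delta d _ k Hk).
  - unfold deltaM. rewrite Nat.eqb_refl. destruct (Nat.eqb_spec k j). subst; ring. ring.
  - intros l _ hl. unfold deltaM. destruct (Nat.eqb_spec l k); [lia|ring].
Qed.

Lemma column_prop d N K : incoherent_kraus d N K ->
  forall n j a b, (n < N)%nat -> (j < d)%nat -> (a < d)%nat -> (b < d)%nat -> a <> b ->
  K n a j = C0 \/ K n b j = C0.
Proof.
  intros [_ HI] n j a b Hn Hj Ha Hb Hab.
  pose proof (HI (deltaM j) (deltaM_incoh d j Hj) n Hn a b Ha Hb Hab) as E.
  assert (mat_mul d (mat_mul d (K n) (deltaM j)) (adjoint (K n)) a b = Cmul (K n a j) (Cconj (K n b j))) as E2.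
  { unfold mat_mul at 1. rewrite (sumC_delta d _ j Hj).
    - rewrite mul_deltaM, Nat.eqb_refl by auto. reflexivity.
    - intros k Hk hk. rewrite mul_deltaM by auto. destruct (Nat.eqb_spec k j); [lia|ring]. }
  rewrite E2 in E. apply Cmul_eq0 in E. destruct E as [E|E]; [left|right]; auto.
  apply Cconj_eq0; auto.
Qed.

Lemma sumR_atmost_one n (g : nat -> R) c : 0 <= c ->
  (forall i, (i < n)%nat -> 0 <= g i <= c) ->
  (forall i i', (i < n)%nat -> (i' < n)%nat -> i <> i' -> g i = 0 \/ g i' = 0) ->
  sumR n g <= c.
Proof. induction n; simpl; intros Hc H1 H2. lra.
  destruct (Req_dec (g n) 0) as [E|E].
  - rewrite E. assert (sumR n g <= c); [|lra]. apply IHn. auto.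
    intros i Hi; apply H1; lia. intros i i' Hi Hi' hh; apply H2; auto; lia.
  - rewrite sumR_zero. destruct (H1 n ltac:(lia)); lra.
    intros k Hk. destruct (H2 k n ltac:(lia) ltac:(lia) ltac:(lia)); [auto|contradiction].
Qed.
Fixpoint cntpos (d : nat) (f : nat -> R) : nat :=
  match d with O => O | S k => (cntpos k f + (if Rlt_dec 0 (f k) then 1 else 0))%nat end.

Lemma cnt0 d f : cntpos d f = O -> forall j, (j < d)%nat -> f j <= 0.
Proof. induction d; simpl; intros H j Hj. lia.
  destruct (Rlt_dec 0 (f d)); [lia|].
  destruct (Nat.eq_dec j d). subst; lra. apply IHd; lia. Qed.

Lemma exists_min d f : (0 < cntpos d f)%nat ->
  exists j0, (j0 < d)%nat /\ 0 < f j0 /\ forall j, (j < d)%nat -> 0 < f j -> f j0 <= f j.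
Proof. induction d; simpl; intros H. lia.
  destruct (Nat.eq_dec (cntpos d f) 0) as [E|E].
  - destruct (Rlt_dec 0 (f d)); [|lia]. exists d. split; [lia|split; auto].
    intros j Hj Hp. destruct (Nat.eq_dec j d). subst; lra.
    pose proof (cnt0 d f E j ltac:(lia)). lra.
  - destruct IHd as [j1 [H1 [H2 H3]]]. lia.
    destruct (Rlt_dec 0 (f d)) as [p|p].
    + destruct (Rle_dec (f j1) (f d)).
      * exists j1. split; [lia|split; auto]. intros j Hj Hp.
        destruct (Nat.eq_dec j d). subst; auto. apply H3; auto; lia.
      * exists d. split; [lia|split; auto]. intros j Hj Hp.
        destruct (Nat.eq_dec j d). subst; lra. pose proof (H3 j ltac:(lia) Hp). lra.
    + exists j1. split; [lia|split; auto]. intros j Hj Hp.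
      destruct (Nat.eq_dec j d). subst; lra. apply H3; auto; lia.
Qed.

Lemma cnt_le d f g : (forall j, (j < d)%nat -> 0 < g j -> 0 < f j) -> (cntpos d g <= cntpos d f)%nat.
Proof. induction d; simpl; intros H. lia.
  assert (cntpos d g <= cntpos d f)%nat by (apply IHd; intros; apply H; auto; lia).
  destruct (Rlt_dec 0 (g d)), (Rlt_dec 0 (f d)); try lia.
  exfalso; apply n, H; auto. Qed.

Lemma cnt_lt d f g j0 : (forall j, (j < d)%nat -> 0 < g j -> 0 < f j) -> (j0 < d)%nat ->
  0 < f j0 -> ~ 0 < g j0 -> (cntpos d g < cntpos d f)%nat.
Proof. induction d; simpl; intros H Hj0 Hf Hg. lia.
  destruct (Nat.eq_dec j0 d).
  - subst. assert (cntpos d g <= cntpos d f)%nat by (apply cnt_le; intros; apply H; auto; lia).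
    destruct (Rlt_dec 0 (g d)), (Rlt_dec 0 (f d)); try lia; contradiction.
  - assert (cntpos d g < cntpos d f)%nat by (apply IHd; auto; try lia; intros; apply H; auto; lia).
    destruct (Rlt_dec 0 (g d)), (Rlt_dec 0 (f d)); try lia.
    exfalso; apply n0, H; auto. Qed.

Lemma applyM_vanish d (A : Mat) (v : Vec) i :
  (forall j, (j < d)%nat -> A i j = C0 \/ v j = C0) -> applyM d A v i = C0.
Proof. intros H. unfold applyM. apply sumC_zero. intros k Hk.
  destruct (H k Hk) as [E|E]; rewrite E; ring. Qed.

Lemma applyM_ext d (A : Mat) (v w : Vec) i :
  (forall j, (j < d)%nat -> Cmul (A i j) (v j) = Cmul (A i j) (w j)) -> applyM d A v i = applyM d A w i.
Proof. intros H; unfold applyM; apply sumC_ext; auto. Qed.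

Lemma nonzero_witness d (A : Mat) (v : Vec) i : Cnorm2 (applyM d A v i) <> 0 ->
  exists j, (j < d)%nat /\ A i j <> C0 /\ v j <> C0.
Proof. intro H. apply NNPP; intro H'. apply H. rewrite applyM_vanish. apply Cnorm2_C0.
  intros j Hj. destruct (Cdec (A i j) C0); auto. destruct (Cdec (v j) C0); auto.
  exfalso; apply H'; exists j; auto. Qed.


Lemma LC_base d N K (a : Vec) (l : nat -> R) (L : nat -> nat -> R) :
  cntpos d l = O -> (forall j, (j < d)%nat -> 0 <= l j) ->
  (forall n i j, (n < N)%nat -> (i < d)%nat -> (j < d)%nat -> K n i j <> C0 -> a j <> C0 -> L n i <= l j) ->
  sumR N (fun n => sumR d (fun i => Cnorm2 (applyM d (K n) a i) * L n i)) <= sumR d (fun j => Cnorm2 (a j) * l j).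
Proof.
  intros Hc Hl HL. apply Rle_trans with 0.
  - replace 0 with (sumR N (fun _ => sumR d (fun _ => 0))).
    2:{ apply sumR_zero; intros; apply sumR_zero; auto. }
    apply sumR_le; intros n Hn; apply sumR_le; intros i Hi.
    destruct (Req_dec (Cnorm2 (applyM d (K n) a i)) 0) as [E|E].
    + rewrite E; lra.
    + destruct (nonzero_witness d (K n) a i E) as [j [Hj [H1 H2]]].
      pose proof (HL n i j Hn Hi Hj H1 H2). pose proof (cnt0 d l Hc j Hj).
      pose proof (Cnorm2_nonneg (applyM d (K n) a i)). nra.
  - apply sumR_nonneg; intros j Hj. pose proof (Hl j Hj). pose proof (Cnorm2_nonneg (a j)). nra.
Qed.
Lemma LC d N K (a : Vec) : kraus_complete d N K -> forall c (l : nat -> R) (L : nat -> nat -> R),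
  (cntpos d l <= c)%nat -> (forall j, (j < d)%nat -> 0 <= l j) ->
  (forall n i j, (n < N)%nat -> (i < d)%nat -> (j < d)%nat -> K n i j <> C0 -> a j <> C0 -> L n i <= l j) ->
  sumR N (fun n => sumR d (fun i => Cnorm2 (applyM d (K n) a i) * L n i)) <= sumR d (fun j => Cnorm2 (a j) * l j).
Proof.
  intros HK c. induction c as [|c IH]; intros l L Hc Hl HL.
  { apply LC_base; auto; lia. }
  destruct (Nat.eq_dec (cntpos d l) 0) as [E0|E0].
  { apply LC_base; auto. }
  destruct (exists_min d l ltac:(lia)) as [j0 [Hj0 [Ht Hmin]]].
  set (t := l j0) in *.
  set (l' := fun j => if Rlt_dec 0 (l j) then l j - t else 0).
  set (L' := fun n i => Rmax (L n i - t) 0).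
  set (P := fun n i => forall j, (j < d)%nat -> K n i j <> C0 -> a j <> C0 -> 0 < l j).
  set (chi := fun n i => if excluded_middle_informative (P n i) then 1 else 0).
  set (b := fun j => if Rlt_dec 0 (l j) then a j else C0).
  set (x := fun n i => Cnorm2 (applyM d (K n) a i)).
  assert (Hl' : forall j, (j < d)%nat -> 0 <= l' j).
  { intros j Hj. unfold l'. destruct (Rlt_dec 0 (l j)). pose proof (Hmin j Hj r). lra. lra. }
  assert (Hc' : (cntpos d l' <= c)%nat).
  { assert (cntpos d l' < cntpos d l)%nat; [|lia].
    apply cnt_lt with j0; auto.
    - intros j Hj. unfold l'. destruct (Rlt_dec 0 (l j)); auto. lra.
    - unfold l'. destruct (Rlt_dec 0 (l j0)). fold t; lra. lra. }
  assert (HL' : forall n i j, (n < N)%nat -> (i < d)%nat -> (j < d)%nat -> K n i j <> C0 -> a j <> C0 -> L' n i <= l' j).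
  { intros n i j Hn Hi Hj H1 H2. pose proof (HL n i j Hn Hi Hj H1 H2). unfold L', l'.
    destruct (Rlt_dec 0 (l j)).
    - pose proof (Hmin j Hj r). apply Rmax_lub; lra.
    - pose proof (Hl j Hj). apply Rmax_lub; lra. }
  pose proof (IH l' L' Hc' Hl' HL') as IH'.
  assert (Hpt : forall n i, (n < N)%nat -> (i < d)%nat ->
     x n i * L n i <= t * Cnorm2 (applyM d (K n) b i) + x n i * L' n i).
  { intros n i Hn Hi. assert (0 <= x n i) by apply Cnorm2_nonneg.
    assert (0 <= Cnorm2 (applyM d (K n) b i)) by apply Cnorm2_nonneg.
    destruct (excluded_middle_informative (P n i)) as [HP|HP].
    - assert (applyM d (K n) b i = applyM d (K n) a i) as Eb.
      { apply applyM_ext. intros j Hj. unfold b. destruct (Rlt_dec 0 (l j)); auto.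
        destruct (Cdec (K n i j) C0) as [e|e]. rewrite e; ring.
        destruct (Cdec (a j) C0) as [e'|e']. rewrite e'; ring.
        exfalso; apply n0, (HP j Hj e e'). }
      rewrite Eb. fold (x n i). unfold L'.
      pose proof (Rmax_l (L n i - t) 0). nra.
    - assert (exists j, (j < d)%nat /\ K n i j <> C0 /\ a j <> C0 /\ ~ 0 < l j) as [j [Hj [H1 [H2 H3]]]].
      { apply NNPP; intro Hn'. apply HP. intros j Hj H1 H2. apply NNPP; intro H3.
        apply Hn'; exists j; auto. }
      pose proof (HL n i j Hn Hi Hj H1 H2).
      assert (L n i <= L' n i) by (unfold L'; pose proof (Rmax_r (L n i - t) 0); lra).
      nra. }
  apply Rle_trans with (sumR N (fun n => sumR d (fun i => t * Cnorm2 (applyM d (K n) b i) + x n i * L' n i))).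
  { apply sumR_le; intros n Hn; apply sumR_le; intros i Hi; apply Hpt; auto. }
  rewrite (sumR_ext N _ (fun n => t * sumR d (fun i => Cnorm2 (applyM d (K n) b i)) + sumR d (fun i => x n i * L' n i))).
  2:{ intros n Hn. rewrite sumR_add, sumR_mul_l. reflexivity. }
  rewrite sumR_add, <- sumR_mul_l. rewrite (completeness_id d N K b HK).
  unfold x. eapply Rle_trans. apply Rplus_le_compat_l. apply IH'.
  rewrite sumR_mul_l, <- sumR_add. apply Req_le. apply sumR_ext. intros j Hj.
  unfold b, l'. pose proof (Hl j Hj). destruct (Rlt_dec 0 (l j)).
  - ring.
  - rewrite Cnorm2_C0. assert (l j = 0) as -> by lra. ring.
Qed.
Lemma ln_le_minus1 y : 0 < y -> ln y <= y - 1.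
Proof. intro. pose proof (exp_ineq1_le (ln y)). rewrite exp_ln in H0; auto. lra. Qed.
Lemma ln_mono x y : 0 < x -> x <= y -> ln x <= ln y.
Proof. intros. destruct H0. left; apply ln_increasing; auto. subst; lra. Qed.
Lemma ln_div' x y : 0 < x -> 0 < y -> ln (x / y) = ln x - ln y.
Proof. intros. unfold Rdiv. rewrite ln_mult by (auto; apply Rinv_0_lt_compat; auto). rewrite ln_Rinv by auto. ring. Qed.

Definition h (x s : R) : R := if Rlt_dec 0 x then x * ln (x / s) else 0.
Definition nrm (d : nat) (v : Vec) : R := sumR d (fun k => Cnorm2 (v k)).
Definition Tn (d : nat) (v : Vec) : R := - sumR d (fun i => h (Cnorm2 (v i)) (nrm d v)).

Lemma nrm_nonneg d v : 0 <= nrm d v.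
Proof. apply sumR_nonneg; intros; apply Cnorm2_nonneg. Qed.
Lemma term_le_nrm d v i : (i < d)%nat -> Cnorm2 (v i) <= nrm d v.
Proof. intro; apply (sumR_term_le d (fun k => Cnorm2 (v k))); auto. intros; apply Cnorm2_nonneg. Qed.

Lemma pure_ineq d N K (a : Vec) : incoherent_kraus d N K -> nrm d a = 1 ->
  sumR N (fun n => Tn d (applyM d (K n) a)) <= Tn d a.
Proof.
  intros HIK Ha. pose proof (proj1 HIK) as HK.
  set (al := fun j => Cnorm2 (a j)).
  set (A := fun n i => sumR d (fun j => if Cdec (K n i j) C0 then 0 else al j)).
  set (q := fun n => nrm d (applyM d (K n) a)).
  set (x := fun n i => Cnorm2 (applyM d (K n) a i)).
  set (L := fun n i => if Rlt_dec 0 (A n i) then - ln (A n i) else 0).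
  set (l := fun j => if Rlt_dec 0 (al j) then - ln (al j) else 0).
  assert (Hal : forall j, (j < d)%nat -> 0 <= al j <= 1).
  { intros j Hj; split. apply Cnorm2_nonneg. rewrite <- Ha. apply term_le_nrm; auto. }
  assert (HA0 : forall n i, 0 <= A n i).
  { intros n i. apply sumR_nonneg; intros j Hj. destruct (Cdec _ _). lra. apply Hal; auto. }
  assert (HAge : forall n i j, (j < d)%nat -> K n i j <> C0 -> al j <= A n i).
  { intros n i j Hj HKj. unfold A.
    pose proof (sumR_term_le d (fun j => if Cdec (K n i j) C0 then 0 else al j) j) as T.
    simpl in T. destruct (Cdec (K n i j) C0); [contradiction|]. apply T; auto.
    intros k Hk. destruct (Cdec _ _). lra. apply Hal; auto. }
  assert (HA1 : forall n, (n < N)%nat -> sumR d (fun i => A n i) <= 1).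
  { intros n Hn. unfold A. rewrite sumR_swap.
    replace 1 with (sumR d al) by (rewrite <- Ha; reflexivity).
    apply sumR_le; intros j Hj. apply sumR_atmost_one. apply Hal; auto.
    - intros i Hi. destruct (Cdec _ _). pose proof (Hal j Hj); lra. pose proof (Hal j Hj); lra.
    - intros i i' Hi Hi' Hne. destruct (column_prop d N K HIK n j i i' Hn Hj Hi Hi' Hne) as [E|E].
      + left. destruct (Cdec (K n i j) C0); [auto|contradiction].
      + right. destruct (Cdec (K n i' j) C0); [auto|contradiction]. }
  assert (Hsumx : sumR N (fun n => sumR d (fun i => x n i)) = 1).
  { unfold x. rewrite (completeness_id d N K a HK). exact Ha. }
  (* pointwise Gibbs *)
  assert (HG : forall n i, (n < N)%nat -> (i < d)%nat ->
     - h (x n i) (q n) <= x n i * L n i + q n * A n i - x n i).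
  { intros n i Hn Hi. assert (0 <= q n) by apply nrm_nonneg.
    assert (x n i <= q n) by (apply term_le_nrm; auto).
    unfold h. destruct (Rlt_dec 0 (x n i)) as [Hx|Hx].
    - destruct (nonzero_witness d (K n) a i ltac:(unfold x in Hx; lra)) as [j [Hj [H1 H2]]].
      assert (0 < al j) by (apply Cnorm2_pos; auto).
      pose proof (HAge n i j Hj H1). assert (HAp : 0 < A n i) by lra.
      unfold L. destruct (Rlt_dec 0 (A n i)); [|lra].
      assert (0 < q n) by lra.
      pose proof (ln_le_minus1 (q n * A n i / x n i) ltac:(apply Rdiv_lt_0_compat; nra)).
      rewrite ln_div' in H6 by nra. rewrite ln_mult in H6 by lra.
      rewrite ln_div' by lra.
      assert (x n i * (q n * A n i / x n i - 1) = q n * A n i - x n i) by (field; lra).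
      nra.
    - pose proof (HA0 n i). assert (Ex : x n i = 0) by (pose proof (Cnorm2_nonneg (applyM d (K n) a i)); unfold x in *; lra).
      rewrite Ex. nra. }
  assert (Hstep1 : sumR N (fun n => Tn d (applyM d (K n) a)) <=
      sumR N (fun n => sumR d (fun i => x n i * L n i)) + sumR N (fun n => q n * sumR d (fun i => A n i))
      - sumR N (fun n => sumR d (fun i => x n i))).
  { unfold Rminus. rewrite <- sumR_opp, <- !sumR_add. apply sumR_le; intros n Hn.
    unfold Tn. rewrite <- sumR_opp, sumR_mul_l, <- sumR_opp, <- !sumR_add. apply sumR_le; intros i Hi.
    pose proof (HG n i Hn Hi). fold (q n). unfold x in *. lra. }
  assert (Hstep2 : sumR N (fun n => q n * sumR d (fun i => A n i)) <= 1).
  { rewrite <- Hsumx. apply sumR_le; intros n Hn. pose proof (HA1 n Hn).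
    assert (0 <= q n) by apply nrm_nonneg.
    change (q n * sumR d (fun i => A n i) <= q n). nra. }
  assert (Hstep3 : sumR N (fun n => sumR d (fun i => x n i * L n i)) <= sumR d (fun j => al j * l j)).
  { apply (LC d N K a HK (cntpos d l)); auto.
    - intros j Hj. unfold l. destruct (Rlt_dec 0 (al j)); [|lra].
      pose proof (ln_mono (al j) 1 r ltac:(apply Hal; auto)). rewrite ln_1 in H; lra.
    - intros n i j Hn Hi Hj H1 H2. assert (0 < al j) by (apply Cnorm2_pos; auto).
      pose proof (HAge n i j Hj H1). unfold L, l.
      destruct (Rlt_dec 0 (A n i)); [|lra]. destruct (Rlt_dec 0 (al j)); [|lra].
      pose proof (ln_mono (al j) (A n i) r0 H0). lra. }
  assert (Hstep4 : sumR d (fun j => al j * l j) = Tn d a).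
  { unfold Tn. rewrite Ha, <- sumR_opp. apply sumR_ext; intros j Hj. unfold h, l. fold (al j).
    destruct (Rlt_dec 0 (al j)). unfold Rdiv; rewrite Rinv_1, Rmult_1_r; ring. ring. }
  lra.
Qed.
Lemma Cnorm2_RtoC_mul c z : Cnorm2 (Cmul (RtoC c) z) = c * c * Cnorm2 z.
Proof. unfold Cnorm2; simpl; ring. Qed.

Lemma nrm_zero d v : nrm d v = 0 -> forall i, (i < d)%nat -> v i = C0.
Proof. intros H i Hi. apply Cnorm2_zero. pose proof (term_le_nrm d v i Hi).
  pose proof (Cnorm2_nonneg (v i)). lra. Qed.

Lemma Tn_nonneg d v : 0 <= Tn d v.
Proof. unfold Tn. rewrite <- sumR_opp. apply sumR_nonneg. intros i Hi. unfold h.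
  destruct (Rlt_dec 0 (Cnorm2 (v i))); [|lra].
  pose proof (term_le_nrm d v i Hi).
  assert (ln (Cnorm2 (v i) / nrm d v) <= 0).
  { rewrite ln_div' by lra. pose proof (ln_mono _ _ r H). lra. }
  nra. Qed.

Lemma scaled_cost d (w : Vec) s : s = nrm d w -> 0 < s ->
  s * RI_pure d (fun i => Cmul (RtoC (/ sqrt s)) (w i)) = Tn d w / ln 2.
Proof.
  intros Es Hs. assert (Hsq : / sqrt s * / sqrt s = / s).
  { rewrite <- Rinv_mult, sqrt_sqrt; auto; lra. }
  assert (Hln : 0 < ln 2) by (pose proof ln_lt_2; lra).
  unfold RI_pure, Tn. rewrite <- Es. rewrite <- !sumR_opp. unfold Rdiv.
  rewrite sumR_mul_l, sumR_mul_r. apply sumR_ext; intros i Hi.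
  rewrite Cnorm2_RtoC_mul, Hsq. unfold xlog2, h.
  pose proof (Cnorm2_nonneg (w i)).
  destruct (Rlt_dec 0 (Cnorm2 (w i))) as [p|p].
  - destruct (Rle_dec (/ s * Cnorm2 (w i)) 0) as [q|q].
    + exfalso. assert (0 < / s * Cnorm2 (w i)) by (apply Rmult_lt_0_compat; auto; apply Rinv_0_lt_compat; auto). lra.
    + replace (Cnorm2 (w i) / s) with (/ s * Cnorm2 (w i)) by (unfold Rdiv; ring). field; lra.
  - assert (Cnorm2 (w i) = 0) as E by lra. rewrite E, Rmult_0_r.
    destruct (Rle_dec 0 0); [ring|lra].
Qed.

Lemma build_decomp d : forall m (w : nat -> Vec),
  exists m' p psi, (forall e, (e < m')%nat -> 0 < p e) /\
    sumR m' p = sumR m (fun e => nrm d (w e)) /\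
    (forall e, (e < m')%nat -> normalized d (psi e)) /\
    (forall i j, (i < d)%nat -> (j < d)%nat ->
       sumC m' (fun e => Cmul (RtoC (p e)) (outer (psi e) i j)) = sumC m (fun e => outer (w e) i j)) /\
    sumR m' (fun e => p e * RI_pure d (psi e)) = sumR m (fun e => Tn d (w e) / ln 2).
Proof.
  induction m; intros w.
  { exists O, (fun _ => 0), (fun _ _ => C0). simpl. repeat split; intros; try lia; reflexivity. }
  destruct (IHm w) as [m' [p [psi [H1 [H2 [H3 [H4 H5]]]]]]].
  set (s := nrm d (w m)).
  destruct (Rlt_dec 0 s) as [Hs|Hs].
  - set (c := / sqrt s).
    set (nv := fun i => Cmul (RtoC c) (w m i)).
    exists (S m'), (fun e => if Nat.eqb e m' then s else p e), (fun e => if Nat.eqb e m' then nv else psi e).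
    assert (Hc : c * c = / s) by (unfold c; rewrite <- Rinv_mult, sqrt_sqrt; auto; lra).
    repeat split.
    + intros e He. destruct (Nat.eqb_spec e m'); auto. apply H1; lia.
    + simpl. rewrite Nat.eqb_refl. rewrite <- H2. f_equal. apply sumR_ext; intros e He.
      destruct (Nat.eqb_spec e m'); [lia|auto].
    + intros e He. destruct (Nat.eqb_spec e m').
      * unfold normalized, nv. rewrite (sumR_ext d _ (fun i => c * c * Cnorm2 (w m i))).
        rewrite <- sumR_mul_l. fold (nrm d (w m)). fold s. rewrite Hc. field; lra.
        intros; apply Cnorm2_RtoC_mul.
      * apply H3; lia.
    + intros i j Hi Hj. simpl. rewrite Nat.eqb_refl. rewrite <- H4 by auto. f_equal.
      * apply sumC_ext; intros e He. destruct (Nat.eqb_spec e m'); [lia|auto].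
      * unfold outer, nv. rewrite Cconj_mul, Cconj_RtoC.
        transitivity (Cmul (RtoC (s * (c * c))) (Cmul (w m i) (Cconj (w m j)))).
        { rewrite !RtoC_mul. ring. }
        rewrite Hc. replace (s * / s) with 1 by (field; lra). apply Ceq; simpl; ring.
    + simpl. rewrite Nat.eqb_refl. rewrite <- H5. f_equal.
      * apply sumR_ext; intros e He. destruct (Nat.eqb_spec e m'); [lia|auto].
      * apply scaled_cost; auto.
  - assert (Hs0 : s = 0) by (pose proof (nrm_nonneg d (w m)); fold s in H; lra).
    pose proof (nrm_zero d (w m) Hs0) as Hz.
    exists m', p, psi. repeat split; auto.
    + simpl. rewrite H2. fold s; rewrite Hs0; ring.
    + intros i j Hi Hj. simpl. rewrite H4 by auto. unfold outer. rewrite (Hz i Hi). apply Ceq; simpl; ring.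
    + simpl. rewrite H5. assert (Tn d (w m) = 0) as ->; [|unfold Rdiv; ring].
      unfold Tn. rewrite sumR_zero. ring.
      intros i Hi. rewrite (Hz i Hi). unfold h. rewrite Cnorm2_C0. destruct (Rlt_dec 0 0); [lra|auto].
Qed.

Lemma RI_pure_nonneg d psi : normalized d psi -> 0 <= RI_pure d psi.
Proof. intro Hn. unfold RI_pure. rewrite <- sumR_opp. apply sumR_nonneg. intros i Hi.
  unfold xlog2. destruct (Rle_dec (Cnorm2 (psi i)) 0); [lra|].
  assert (Cnorm2 (psi i) <= 1).
  { rewrite <- Hn. apply (sumR_term_le d (fun k => Cnorm2 (psi k))); auto. intros; apply Cnorm2_nonneg. }
  assert (ln (Cnorm2 (psi i)) <= 0) by (assert (0 < Cnorm2 (psi i)) by lra; pose proof (ln_mono (Cnorm2 (psi i)) 1 H0 H); rewrite ln_1 in H1; lra).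
  assert (0 < ln 2) by (pose proof ln_lt_2; lra).
  assert (ln (Cnorm2 (psi i)) / ln 2 <= 0).
  { unfold Rdiv. pose proof (Rinv_0_lt_compat _ H1). nra. }
  nra. Qed.

Lemma costs_nonneg d rho r : RI_costs d rho r -> 0 <= r.
Proof. intros [m [p [psi [[Hp [_ [Hn _]]] ->]]]]. apply sumR_nonneg. intros e He.
  pose proof (Hp e He). pose proof (RI_pure_nonneg d (psi e) (Hn e He)). nra. Qed.

Lemma RI_glb d rho : (exists r, RI_costs d rho r) -> is_glb (RI_costs d rho) (RI d rho).
Proof. intros [r0 Hr0]. unfold RI. apply epsilon_spec.
  set (E := fun y => RI_costs d rho (- y)).
  assert (bound E) as Hb.
  { exists 0. intros y Hy. pose proof (costs_nonneg d rho _ Hy). lra. }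
  assert (exists y, E y) as Hne. { exists (- r0). unfold E. rewrite Ropp_involutive; auto. }
  destruct (completeness E Hb Hne) as [l [Hl1 Hl2]].
  exists (- l). split.
  - intros x Hx. assert (E (- x)) by (unfold E; rewrite Ropp_involutive; auto).
    pose proof (Hl1 _ H). lra.
  - intros b Hb'. assert (l <= - b); [|lra]. apply Hl2. intros y Hy. pose proof (Hb' _ Hy). lra.
Qed.
Definition ev (k : nat) (s : C) : Vec := fun i => if Nat.eqb i k then s else C0.

Lemma sum_ev_r d k s f : (k < d)%nat -> sumC d (fun j => Cmul (f j) (ev k s j)) = Cmul (f k) s.
Proof. intro Hk. rewrite (sumC_delta d _ k Hk). unfold ev; rewrite Nat.eqb_refl; auto.
  intros j _ Hj. unfold ev. destruct (Nat.eqb_spec j k); [lia|ring]. Qed.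
Lemma sum_ev_l d k s f : (k < d)%nat -> sumC d (fun i => Cmul (Cconj (ev k s i)) (f i)) = Cmul (Cconj s) (f k).
Proof. intro Hk. rewrite (sumC_delta d _ k Hk). unfold ev; rewrite Nat.eqb_refl; auto.
  intros j _ Hj. unfold ev. destruct (Nat.eqb_spec j k); [lia|]. rewrite Cconj_C0; ring. Qed.

Lemma quad_expand d A v k s : (k < d)%nat ->
  quad d A (fun i => Cadd (v i) (ev k s i)) =
  Cadd (Cadd (Cadd (quad d A v) (Cmul (Cconj s) (sumC d (fun j => Cmul (A k j) (v j)))))
     (Cmul s (sumC d (fun i => Cmul (Cconj (v i)) (A i k))))) (Cmul (Cmul (Cconj s) s) (A k k)).
Proof.
  intro Hk. unfold quad.
  transitivity (sumC d (fun i => Cadd (Cadd (Cadd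
     (sumC d (fun j => Cmul (Cconj (v i)) (Cmul (A i j) (v j))))
     (Cmul (Cconj (ev k s i)) (sumC d (fun j => Cmul (A i j) (v j)))))
     (Cmul (Cmul (Cconj (v i)) (A i k)) s))
     (Cmul (Cconj (ev k s i)) (Cmul (A i k) s)))).
  { apply sumC_ext; intros i Hi.
    transitivity (Cadd (Cadd (Cadd
       (sumC d (fun j => Cmul (Cconj (v i)) (Cmul (A i j) (v j))))
       (sumC d (fun j => Cmul (Cconj (ev k s i)) (Cmul (A i j) (v j)))))
       (sumC d (fun j => Cmul (Cmul (Cconj (v i)) (A i j)) (ev k s j))))
       (sumC d (fun j => Cmul (Cmul (Cconj (ev k s i)) (A i j)) (ev k s j)))).
    { rewrite <- !sumC_add. apply sumC_ext; intros j Hj. rewrite Cconj_add. ring. }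
    rewrite !sum_ev_r by auto. rewrite sumC_mul_l. ring. }
  rewrite !sumC_add. rewrite !sum_ev_l by auto.
  rewrite <- sumC_mul_r. ring.
Qed.
Definition psdq (d : nat) (A : Mat) : Prop := forall v, 0 <= Cre (quad d A v).

Lemma herm_entry d A i j : hermitian d A -> (i < d)%nat -> (j < d)%nat -> A i j = Cconj (A j i).
Proof. intros H Hi Hj. apply (H i j Hi Hj). Qed.

Lemma herm_diag_real d A k : hermitian d A -> (k < d)%nat -> Cim (A k k) = 0.
Proof. intros H Hk. pose proof (herm_entry d A k k H Hk Hk) as E.
  assert (Cim (A k k) = Cim (Cconj (A k k))) by (rewrite <- E; auto). simpl in H0. lra. Qed.

Lemma gamma_conj d A v k : hermitian d A -> (k < d)%nat ->
  sumC d (fun i => Cmul (Cconj (v i)) (A i k)) = Cconj (sumC d (fun j => Cmul (A k j) (v j))).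
Proof. intros H Hk. rewrite Cconj_sum. apply sumC_ext; intros i Hi.
  rewrite (herm_entry d A i k H Hi Hk), Cconj_mul. ring. Qed.

Lemma quad_ev d A j : (j < d)%nat -> quad d A (ev j C1) = A j j.
Proof. intro Hj. unfold quad.
  rewrite (sumC_ext d _ (fun i => Cmul (Cconj (ev j C1 i)) (Cmul (A i j) C1))).
  - rewrite sum_ev_l by auto. apply Ceq; simpl; ring.
  - intros i Hi. transitivity (Cmul (Cconj (ev j C1 i)) (sumC d (fun l => Cmul (A i l) (ev j C1 l)))).
    + rewrite sumC_mul_l. apply sumC_ext; intros; ring.
    + rewrite sum_ev_r by auto. reflexivity.
Qed.

Lemma diag_nonneg d A j : psdq d A -> (j < d)%nat -> 0 <= Cre (A j j).
Proof. intros H Hj. rewrite <- (quad_ev d A j Hj). apply H. Qed.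

Lemma CS_psd d A v k : hermitian d A -> psdq d A -> (k < d)%nat ->
  Cnorm2 (sumC d (fun j => Cmul (A k j) (v j))) <= Cre (A k k) * Cre (quad d A v).
Proof.
  intros Hh Hp Hk.
  set (b := sumC d (fun j => Cmul (A k j) (v j))).
  set (r := Cre (A k k)). set (Q := Cre (quad d A v)).
  assert (HE : forall t, Cre (quad d A (fun i => Cadd (v i) (ev k (Cmul (RtoC (- t)) b) i))) =
     Q - 2 * t * Cnorm2 b + t * t * Cnorm2 b * r).
  { intro t. rewrite (quad_expand d A v k _ Hk). rewrite (gamma_conj d A v k Hh Hk). fold b.
    pose proof (herm_diag_real d A k Hh Hk) as Hi.
    unfold Q, r, Cnorm2. simpl. rewrite Hi. ring. }
  assert (Hr : 0 <= r) by (apply (diag_nonneg d A k Hp Hk)).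
  assert (HQ : 0 <= Q) by apply Hp.
  assert (Hb : 0 <= Cnorm2 b) by apply Cnorm2_nonneg.
  destruct Hr as [Hr|Hr].
  - pose proof (Hp (fun i => Cadd (v i) (ev k (Cmul (RtoC (- (/ r))) b) i))) as P.
    rewrite HE in P.
    assert (Q - 2 * / r * Cnorm2 b + / r * / r * Cnorm2 b * r = Q - Cnorm2 b / r) as E by (field; lra).
    rewrite E in P. assert (Cnorm2 b / r <= Q) by lra.
    apply Rmult_le_reg_r with (/ r). apply Rinv_0_lt_compat; auto.
    replace (r * Q * / r) with Q by (field; lra). unfold Rdiv in H; lra.
  - rewrite <- Hr. rewrite Rmult_0_l.
    destruct Hb as [Hb|Hb]; [|lra]. exfalso.
    pose proof (Hp (fun i => Cadd (v i) (ev k (Cmul (RtoC (- ((Q + 1) / Cnorm2 b))) b) i))) as P.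
    rewrite HE, <- Hr in P.
    assert (Q - 2 * ((Q + 1) / Cnorm2 b) * Cnorm2 b = - Q - 2) by (field; lra). nra.
Qed.
Lemma zero_row d A k : hermitian d A -> psdq d A -> (k < d)%nat -> Cre (A k k) = 0 ->
  forall j, (j < d)%nat -> A k j = C0.
Proof. intros Hh Hp Hk Hr j Hj. pose proof (CS_psd d A (ev j C1) k Hh Hp Hk) as P.
  rewrite sum_ev_r in P by auto. rewrite Hr, Rmult_0_l in P.
  apply Cnorm2_zero. assert (Cmul (A k j) C1 = A k j) as E by ring. rewrite E in P.
  pose proof (Cnorm2_nonneg (A k j)). lra. Qed.

Lemma Cconj_opp a : Cconj (Copp a) = Copp (Cconj a).
Proof. apply Ceq; simpl; ring. Qed.
Lemma sumC_opp n f : sumC n (fun k => Copp (f k)) = Copp (sumC n f).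
Proof. induction n; simpl. apply Ceq; simpl; ring. rewrite IHn; ring. Qed.

Lemma quad_sub d (A B : Mat) v : quad d (fun i j => Cadd (A i j) (Copp (B i j))) v = Cadd (quad d A v) (Copp (quad d B v)).
Proof. unfold quad. rewrite <- sumC_opp, <- sumC_add. apply sumC_ext; intros.
  rewrite <- sumC_opp, <- sumC_add. apply sumC_ext; intros. ring. Qed.

Lemma quad_outer d u v : quad d (outer u) v =
  Cmul (sumC d (fun i => Cmul (Cconj (v i)) (u i))) (Cconj (sumC d (fun i => Cmul (Cconj (v i)) (u i)))).
Proof. unfold quad, outer. rewrite Cconj_sum, sumC_mul_sums. apply sumC_ext; intros; apply sumC_ext; intros.
  rewrite Cconj_mul, Cconj_conj. ring. Qed.

Lemma Cre_outer_diag u i : Cre (outer u i i) = Cnorm2 (u i).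
Proof. unfold outer, Cnorm2; simpl; ring. Qed.

Lemma chol d : forall c A, hermitian d A -> psdq d A -> (cntpos d (fun i => Cre (A i i)) <= c)%nat ->
  exists m w, forall i j, (i < d)%nat -> (j < d)%nat -> A i j = sumC m (fun e => outer (w e) i j).
Proof.
  induction c as [|c IH]; intros A Hh Hp Hc.
  - exists O, (fun _ _ => C0). intros i j Hi Hj. simpl. apply (zero_row d A i Hh Hp Hi); auto.
    pose proof (cnt0 d (fun i => Cre (A i i)) ltac:(lia) i Hi). pose proof (diag_nonneg d A i Hp Hi). simpl in *; lra.
  - destruct (Nat.eq_dec (cntpos d (fun i => Cre (A i i))) 0) as [E0|E0].
    { exists O, (fun _ _ => C0). intros i j Hi Hj. simpl. apply (zero_row d A i Hh Hp Hi); auto.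
      pose proof (cnt0 d (fun i => Cre (A i i)) E0 i Hi). pose proof (diag_nonneg d A i Hp Hi). simpl in *; lra. }
    destruct (exists_min d (fun i => Cre (A i i)) ltac:(lia)) as [k [Hk [Hr _]]].
    set (r := Cre (A k k)) in *. set (cc := / sqrt r).
    set (u := fun i => Cmul (RtoC cc) (A i k)).
    set (A' := fun i j => Cadd (A i j) (Copp (outer u i j))).
    assert (Hcc : cc * cc = / r) by (unfold cc; rewrite <- Rinv_mult, sqrt_sqrt; lra).
    assert (Hh' : hermitian d A').
    { intros i j Hi Hj. unfold A', adjoint, outer. rewrite (herm_entry d A i j Hh Hi Hj).
      rewrite Cconj_add, Cconj_opp, Cconj_mul, Cconj_conj. ring. }
    assert (Hp' : psdq d A').
    { intro v. unfold A'. rewrite quad_sub, quad_outer.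
      rewrite (sumC_ext d _ (fun i => Cmul (RtoC cc) (Cmul (Cconj (v i)) (A i k)))) by (intros; unfold u; ring).
      rewrite <- sumC_mul_l. rewrite (gamma_conj d A v k Hh Hk).
      pose proof (CS_psd d A v k Hh Hp Hk) as P. fold r in P.
      set (b := sumC d (fun j => Cmul (A k j) (v j))) in *.
      set (Q := Cre (quad d A v)) in *.
      assert (Cre (Cadd (quad d A v) (Copp (Cmul (Cmul (RtoC cc) (Cconj b)) (Cconj (Cmul (RtoC cc) (Cconj b))))))
              = Q - cc * cc * Cnorm2 b) as -> by (unfold Q, Cnorm2; simpl; ring).
      rewrite Hcc. apply Rmult_le_reg_l with r; auto. rewrite Rmult_0_r.
      replace (r * (Q - / r * Cnorm2 b)) with (r * Q - Cnorm2 b) by (field; lra). lra. }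
    assert (Hdiag : forall i, Cre (A' i i) = Cre (A i i) - Cnorm2 (u i)).
    { intro i. unfold A'. rewrite <- Cre_outer_diag. simpl. ring. }
    assert (Hc' : (cntpos d (fun i => Cre (A' i i)) <= c)%nat).
    { assert (cntpos d (fun i => Cre (A' i i)) < cntpos d (fun i => Cre (A i i)))%nat; [|lia].
      apply cnt_lt with k; auto.
      - intros j Hj. rewrite Hdiag. pose proof (Cnorm2_nonneg (u j)). lra.
      - rewrite Hdiag. unfold u. rewrite Cnorm2_RtoC_mul, Hcc.
        unfold Cnorm2. rewrite (herm_diag_real d A k Hh Hk). fold r.
        replace (r - / r * (r * r + 0 * 0)) with 0 by (field; lra). lra. }
    destruct (IH A' Hh' Hp' Hc') as [m [w Hw]].
    exists (S m), (fun e => if Nat.eqb e m then u else w e).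
    intros i j Hi Hj. simpl. rewrite Nat.eqb_refl.
    rewrite (sumC_ext m _ (fun e => outer (w e) i j)).
    + rewrite <- Hw by auto. unfold A'. ring.
    + intros e He. destruct (Nat.eqb_spec e m); [lia|auto].
Qed.
Lemma density_costs d rho : density d rho -> exists r, RI_costs d rho r.
Proof.
  intros [[Hh Hq] Ht].
  destruct (chol d _ rho Hh Hq (le_n _)) as [m [w Hw]].
  destruct (build_decomp d m w) as [m' [p [psi [H1 [H2 [H3 [H4 H5]]]]]]].
  exists (sumR m' (fun e => p e * RI_pure d (psi e))), m', p, psi. split; auto.
  split; auto. split; [|split; auto].
  - rewrite H2. unfold nrm. rewrite sumR_swap.
    transitivity (Cre (trace d rho)); [|rewrite Ht; reflexivity].
    unfold trace. rewrite Cre_sum. apply sumR_ext; intros i Hi.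
    rewrite (Hw i i Hi Hi), Cre_sum. apply sumR_ext; intros e He. rewrite Cre_outer_diag; auto.
  - intros i j Hi Hj. rewrite H4 by auto. apply Hw; auto.
Qed.

Lemma KrhoK d (Kn : Mat) rho m p psi : pure_decomposition d rho m p psi -> forall a b,
  mat_mul d (mat_mul d Kn rho) (adjoint Kn) a b =
  sumC m (fun e => Cmul (RtoC (p e)) (outer (applyM d Kn (psi e)) a b)).
Proof.
  intros [_ [_ [_ Hr]]] a b. unfold mat_mul, adjoint, outer, applyM.
  transitivity (sumC d (fun k => sumC d (fun l => sumC m (fun e =>
     Cmul (Cmul (RtoC (p e)) (Cmul (Kn a l) (psi e l))) (Cmul (Cconj (Kn b k)) (Cconj (psi e k))))))).
  { apply sumC_ext; intros k Hk. rewrite sumC_mul_r. apply sumC_ext; intros l Hl.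
    rewrite (Hr l k Hl Hk). rewrite sumC_mul_l, sumC_mul_r. apply sumC_ext; intros e He.
    unfold outer. ring. }
  transitivity (sumC m (fun e => sumC d (fun l => sumC d (fun k =>
     Cmul (Cmul (RtoC (p e)) (Cmul (Kn a l) (psi e l))) (Cmul (Cconj (Kn b k)) (Cconj (psi e k))))))).
  { rewrite sumC_swap. rewrite (sumC_ext d _ (fun l => sumC m (fun e => sumC d (fun k =>
     Cmul (Cmul (RtoC (p e)) (Cmul (Kn a l) (psi e l))) (Cmul (Cconj (Kn b k)) (Cconj (psi e k))))))).
    - rewrite sumC_swap. reflexivity.
    - intros l Hl. rewrite sumC_swap. reflexivity. }
  apply sumC_ext; intros e He. rewrite Cconj_sum, sumC_mul_sums, sumC_mul_l.
  apply sumC_ext; intros l Hl. rewrite sumC_mul_l. apply sumC_ext; intros k Hk.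
  rewrite Cconj_mul. ring.
Qed.

Lemma kraus_prob_decomp d Kn rho m p psi : pure_decomposition d rho m p psi ->
  kraus_prob d Kn rho = sumR m (fun e => p e * nrm d (applyM d Kn (psi e))).
Proof. intro HD. unfold kraus_prob, trace. rewrite Cre_sum.
  rewrite (sumR_ext d _ (fun a => sumR m (fun e => p e * Cnorm2 (applyM d Kn (psi e) a)))).
  - rewrite sumR_swap. apply sumR_ext; intros e He. unfold nrm. rewrite sumR_mul_l. reflexivity.
  - intros a Ha. rewrite (KrhoK d Kn rho m p psi HD a a), Cre_sum. apply sumR_ext; intros e He.
    unfold outer, Cnorm2; simpl; ring.
Qed.

Lemma Tn_scale d v c : c <> 0 -> Tn d (fun i => Cmul (RtoC c) (v i)) = c * c * Tn d v.
Proof. intro Hc. unfold Tn, nrm. rewrite (sumR_ext d (fun k => Cnorm2 (Cmul (RtoC c) (v k))) (fun k => c * c * Cnorm2 (v k)))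
   by (intros; apply Cnorm2_RtoC_mul).
  rewrite <- sumR_mul_l. fold (nrm d v).
  rewrite <- !sumR_opp, sumR_mul_l. apply sumR_ext; intros i Hi.
  rewrite Cnorm2_RtoC_mul. unfold h. assert (0 < c * c) by (apply Rsqr_pos_lt in Hc; unfold Rsqr in Hc; auto).
  pose proof (term_le_nrm d v i Hi).
  destruct (Rlt_dec 0 (Cnorm2 (v i))) as [q|q]; destruct (Rlt_dec 0 (c * c * Cnorm2 (v i))) as [q'|q'].
  - replace (c * c * Cnorm2 (v i) / (c * c * nrm d v)) with (Cnorm2 (v i) / nrm d v) by (field; lra). ring.
  - exfalso; apply q'; apply Rmult_lt_0_compat; auto.
  - exfalso. pose proof (Cnorm2_nonneg (v i)). nra.
  - ring.
Qed.
Lemma post_bound d Kn rho m p psi : pure_decomposition d rho m p psi -> 0 < kraus_prob d Kn rho ->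
  kraus_prob d Kn rho * RI d (kraus_post d Kn rho) <=
  sumR m (fun e => p e * (Tn d (applyM d Kn (psi e)) / ln 2)).
Proof.
  intros HD HP. set (P := kraus_prob d Kn rho) in *.
  pose proof HD as [Hpos [Hsum [Hnorm Heq]]].
  set (w := fun e i => Cmul (RtoC (sqrt (p e / P))) (applyM d Kn (psi e) i)).
  assert (Hsq : forall e, (e < m)%nat -> sqrt (p e / P) * sqrt (p e / P) = p e / P).
  { intros e He. apply sqrt_sqrt. pose proof (Hpos e He). apply Rlt_le, Rdiv_lt_0_compat; auto. }
  destruct (build_decomp d m w) as [m' [p' [psi' [H1 [H2 [H3 [H4 H5]]]]]]].
  assert (HD' : pure_decomposition d (kraus_post d Kn rho) m' p' psi').
  { split; auto. split; [|split; auto].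
    - rewrite H2. unfold w, nrm.
      rewrite (sumR_ext m _ (fun e => / P * (p e * nrm d (applyM d Kn (psi e))))).
      + rewrite <- sumR_mul_l. fold P. unfold P. rewrite <- (kraus_prob_decomp d Kn rho m p psi HD).
        fold P. field. lra.
      + intros e He. rewrite (sumR_ext d _ (fun i => p e / P * Cnorm2 (applyM d Kn (psi e) i))).
        * rewrite <- sumR_mul_l. unfold nrm, Rdiv. ring.
        * intros i Hi. rewrite Cnorm2_RtoC_mul, Hsq; auto.
    - intros a b Ha Hb. rewrite H4 by auto. unfold kraus_post, scale_mat.
      rewrite (KrhoK d Kn rho m p psi HD a b). fold P. rewrite sumC_mul_l.
      apply sumC_ext; intros e He. unfold w, outer. rewrite Cconj_mul, Cconj_RtoC.
      transitivity (Cmul (RtoC (sqrt (p e / P) * sqrt (p e / P))) (Cmul (applyM d Kn (psi e) a) (Cconj (applyM d Kn (psi e) b)))).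
      + rewrite Hsq by auto. unfold Rdiv. rewrite (RtoC_mul (p e) (/ P)). ring.
      + rewrite RtoC_mul. ring. }
  assert (Hc : RI_costs d (kraus_post d Kn rho) (sumR m' (fun e => p' e * RI_pure d (psi' e)))).
  { exists m', p', psi'. auto. }
  pose proof (proj1 (RI_glb d _ (ex_intro _ _ Hc)) _ Hc) as HR.
  rewrite H5 in HR.
  rewrite (sumR_ext m _ (fun e => / P * (p e * (Tn d (applyM d Kn (psi e)) / ln 2)))) in HR.
  - rewrite <- sumR_mul_l in HR. apply Rmult_le_compat_l with (r := P) in HR; [|lra].
    rewrite <- Rmult_assoc, Rinv_r, Rmult_1_l in HR; lra.
  - intros e He. unfold w. rewrite Tn_scale.
    + rewrite Hsq by auto. unfold Rdiv. ring.
    + pose proof (Hpos e He). apply Rgt_not_eq, sqrt_lt_R0, Rdiv_lt_0_compat; auto.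
Qed.

Lemma Tn_RI_pure d psi : normalized d psi -> Tn d psi / ln 2 = RI_pure d psi.
Proof. intro Hn. unfold Tn, RI_pure. rewrite (Hn : nrm d psi = 1). unfold Rdiv.
  rewrite <- !sumR_opp, sumR_mul_r. apply sumR_ext; intros i Hi. unfold h, xlog2.
  destruct (Rlt_dec 0 (Cnorm2 (psi i))); destruct (Rle_dec (Cnorm2 (psi i)) 0); try lra.
  unfold Rdiv. rewrite Rinv_1, Rmult_1_r. ring.
Qed.

Theorem mainTheorem3 (d N : nat) (K : nat -> Mat) (rho : Mat) :
  incoherent_kraus d N K ->
  density d rho ->
  RI d rho >=
    sumR N (fun n =>
      if Rlt_dec 0 (kraus_prob d (K n) rho)
      then kraus_prob d (K n) rho * RI d (kraus_post d (K n) rho)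
      else 0).
Proof.
  intros HIK Hrho. apply Rle_ge.
  pose proof (RI_glb d rho (density_costs d rho Hrho)) as [_ Hg]. apply Hg.
  intros c [m [p [psi [HD ->]]]].
  assert (Hln : 0 < ln 2) by (pose proof ln_lt_2; lra).
  apply Rle_trans with (sumR N (fun n => sumR m (fun e => p e * (Tn d (applyM d (K n) (psi e)) / ln 2)))).
  { apply sumR_le; intros n Hn. destruct (Rlt_dec 0 (kraus_prob d (K n) rho)).
    - apply post_bound; auto.
    - apply sumR_nonneg; intros e He. destruct HD as [Hpos _].
      pose proof (Hpos e He). pose proof (Tn_nonneg d (applyM d (K n) (psi e))).
      apply Rmult_le_pos; [lra|]. unfold Rdiv. apply Rmult_le_pos; [lra|].
      apply Rlt_le, Rinv_0_lt_compat; auto. }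
  rewrite sumR_swap. apply sumR_le; intros e He.
  destruct HD as [Hpos [_ [Hnorm _]]].
  rewrite <- (Tn_RI_pure d (psi e) (Hnorm e He)).
  rewrite <- sumR_mul_l. apply Rmult_le_compat_l. pose proof (Hpos e He); lra.
  unfold Rdiv. rewrite <- sumR_mul_r. apply Rmult_le_compat_r.
  apply Rlt_le, Rinv_0_lt_compat; auto.
  apply pure_ineq; auto. apply (Hnorm e He).
Qed.
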